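(* Consider the following local training on device $k$. Let $\mathcal{D}_k$ be a finite dataset of $D_k$ labelled samples $(\bm{x},y)$ with labels in $\mathcal{C}=\{1,\dots,C\}$, and $\mathcal{D}_{k,c}\subseteq\mathcal{D}_k$ the samples of class $c$. The model is $\bm{w}_k=(\bm{u}_k,\bm{v}_k)$, with feature extractor $h_k(\bm{x};\bm{u}_k)\in\mathbb{R}^p$, and empirical loss $F_k(\bm{u}_k,\bm{v}_k)=\frac{1}{D_k}\sum_{(\bm{x},y)\in\mathcal{D}_k} f(\bm{x},y;\bm{w}_k)$. Given global class vectors $\bm{\Omega}_{c,t}\in\mathbb{R}^p$ ($c\in\mathcal{C}$) for round $t$, define the knowledge loss $L_k(\bm{u}) = \frac{1}{D_k}\sum_{c=1}^C\sum_{(\bm{x},y)\in\mathcal{D}_{k,c}}\frac12\|h_k(\bm{x};\bm{u})-\bm{\Omega}_{c,t}\|^2$. Starting from $\bm{u}_{k,t,0}=\bm{u}_{k,t}$, $\bm{v}_{k,t,0}=\bm{v}_{k,t}$, perform for $l=0,\dots,\tau-1$: $\bm{u}_{k,t,l+1} = \bm{u}_{k,t,l} - \eta_u\big(\nabla_{\bm{u}}F_k(\bm{u}_{k,t,l},\bm{v}_{k,t,l}) + \lambda\nabla L_k(\bm{u}_{k,t,l})\big)$, $\bm{v}_{k,t,l+1} = \bm{v}_{k,t,l} - \eta_v\nabla_{\bm{v}}F_k(\bm{u}_{k,t,l},\bm{v}_{k,t,l})$, and set $\bm{u}_{k,t+1}=\bm{u}_{k,t,\tau}$, $\bm{v}_{k,t+1}=\bm{v}_{k,t,\tau}$.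 Assume: (i) $F_k$ is continuously differentiable and $\nabla_{\bm{u}}F_k$ is $L_u$-Lipschitz in $\bm{u}$ and $L_{uv}$-Lipschitz in $\bm{v}$, $\nabla_{\bm{v}}F_k$ is $L_v$-Lipschitz in $\bm{v}$ and $L_{vu}$-Lipschitz in $\bm{u}$; (ii) $\|\nabla_{\bm{u}}F_k(\bm{u}_{k,t},\bm{v}_{k,t})\|^2\le G_1^2$ and $\|\nabla_{\bm{v}}F_k(\bm{u}_{k,t},\bm{v}_{k,t})\|^2\le G_2^2$ (uniformly over all iterates); (iii) $\|\nabla h_k(\bm{u}_k)\|^2\le\vartheta^2$ and $\|h_k(\bm{u}_k;\bm{x})\|^2\le\varsigma^2$. Let $\chi=\max\{L_{uv},L_{vu}\}/\sqrt{L_uL_v}$, and suppose $\eta_u\le \frac{1}{4\tau(1+\chi)L_u}$ and $\eta_v\le\frac{1}{2\tau(1+\chi)L_v}$. Then $$F_k(\bm{u}_{k,t+1},\bm{v}_{k,t+1}) - F_k(\bm{u}_{k,t},\bm{v}_{k,t}) \le \Big(2(1+\chi)L_u\eta_u^2\tau^2 - \tfrac12\eta_u\tau\Big)\|\nabla_{\bm{u}}F_k(\bm{u}_{k,t},\bm{v}_{k,t})\|^2 + \Big((1+\chi)L_v\eta_v^2\tau^2 - \tfrac12\eta_v\tau\Big)\|\nabla_{\bm{v}}F_k(\bm{u}_{k,t},\bm{v}_{k,t})\|^2 + A_1 + \tfrac54\eta_u\lambda^2\sum_{l=0}^{\tau-1}\|\nabla L_k(\bm{u}_{k,t,l})\|^2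 + 2\eta_u^2\lambda^2(3\eta_uL_u^2 + 2\eta_v\chi^2L_uL_v)\sum_{l=0}^{\tau-1}(\tau-l)\|\nabla L_k(\bm{u}_{k,t,l})\|^2,$$ where $A_1 = \tau(\tau+1)(2\tau+1)\Big(\eta_u^3G_1^2L_u^2 + \tfrac13\eta_v^3G_2^2L_v^2 + \big(\tfrac23\eta_uG_1^2 + \tfrac12\eta_vG_2^2\big)\eta_u\eta_v\chi^2L_uL_v\Big)$.
   Context: $f(\bm{x},y;\bm{w})$ is a sample-wise loss; $\lambda\ge0$ is a weight hyperparameter; $\tau$ is the number of local gradient steps; $\eta_u,\eta_v>0$ are learning rates; $\|\cdot\|$ is the Euclidean norm. *)

(* Defs.v *)
From HB Require Import structures.
From mathcomp Require Import all_boot all_order all_algebra.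
From mathcomp Require Import all_classical all_reals all_analysis.
Set Implicit Arguments. Unset Strict Implicit. Unset Printing Implicit Defensive.
Import Order.TTheory GRing.Theory Num.Theory.
Import numFieldNormedType.Exports.
Local Open Scope ring_scope.

(* Euclidean inner product, squared norm and norm on row vectors R^n
   (MathComp-Analysis' built-in norm on matrices is the max norm, so we
   define the Euclidean one explicitly). *)
Definition dotv (R : realType) (n : nat) (a b : 'rV[R]_n) : R :=
  \sum_(i < n) a 0 i * b 0 i.
Definition sqnorm (R : realType) (n : nat) (a : 'rV[R]_n) : R := dotv a a.
Definition enorm (R : realType) (n : nat) (a : 'rV[R]_n) : R :=
  Num.sqrt (sqnorm a).
Definition sqfrob (R : realType) (m n : nat) (A : 'M[R]_(m, n)) : R :=
  \sum_(i < m) \sum_(j < n) A i j ^+ 2.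

Definition emp_loss (R : realType) (X : Type) (C du dv : nat)
  (s : seq (X * 'I_C)) (f : X -> 'I_C -> 'rV[R]_du -> 'rV[R]_dv -> R)
  (u : 'rV[R]_du) (v : 'rV[R]_dv) : R :=
  (size s)%:R^-1 * \sum_(z <- s) f z.1 z.2 u v.

Definition know_loss (R : realType) (X : Type) (C du p : nat)
  (s : seq (X * 'I_C)) (h : X -> 'rV[R]_du -> 'rV[R]_p) (Om : 'I_C -> 'rV[R]_p)
  (u : 'rV[R]_du) : R :=
  (size s)%:R^-1 *
  \sum_(c < C) \sum_(z <- s | z.2 == c) (2%:R^-1 * sqnorm (h z.1 u - Om c)).

Fixpoint local_iter (R : realType) (du dv : nat)
  (gu : 'rV[R]_du -> 'rV[R]_dv -> 'rV[R]_du)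
  (gv : 'rV[R]_du -> 'rV[R]_dv -> 'rV[R]_dv)
  (gL : 'rV[R]_du -> 'rV[R]_du)
  (eta_u eta_v lam : R) (u0 : 'rV[R]_du) (v0 : 'rV[R]_dv) (l : nat)
  : 'rV[R]_du * 'rV[R]_dv :=
  match l with
  | 0 => (u0, v0)
  | l'.+1 =>
      let w := local_iter gu gv gL eta_u eta_v lam u0 v0 l' in
      (w.1 - eta_u *: (gu w.1 w.2 + lam *: gL w.1),
       w.2 - eta_v *: gv w.1 w.2)
  end.

(* Main.v *)
Require Import Defs.
From HB Require Import structures.
From mathcomp Require Import all_boot all_order all_algebra.
From mathcomp Require Import all_classical all_reals all_analysis.
From mathcomp Require Import ring lra.
Import Order.TTheory GRing.Theory Num.Theory.
Import numFieldNormedType.Exports.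
Local Open Scope ring_scope.

Set Implicit Arguments. Unset Strict Implicit.


Section Dot.
Variables (R : realType) (n : nat).
Implicit Types (a b c : 'rV[R]_n).

Lemma dotvC a b : dotv a b = dotv b a.
Proof. by rewrite /dotv; apply: eq_bigr => i _; rewrite mulrC. Qed.
Lemma dotvDl a b c : dotv (a + b) c = dotv a c + dotv b c.
Proof. by rewrite /dotv -big_split; apply: eq_bigr => i _; rewrite mxE mulrDl. Qed.
Lemma dotvDr a b c : dotv c (a + b) = dotv c a + dotv c b.
Proof. by rewrite dotvC dotvDl !(dotvC c). Qed.
Lemma dotvZl k a b : dotv (k *: a) b = k * dotv a b.
Proof. by rewrite /dotv mulr_sumr; apply: eq_bigr => i _; rewrite mxE mulrA. Qed.
Lemma dotvZr k a b : dotv a (k *: b) = k * dotv a b.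
Proof. by rewrite dotvC dotvZl dotvC. Qed.
Lemma dotvNl a b : dotv (- a) b = - dotv a b.
Proof. by rewrite -scaleN1r dotvZl mulN1r. Qed.
Lemma dotvNr a b : dotv a (- b) = - dotv a b.
Proof. by rewrite dotvC dotvNl dotvC. Qed.
Lemma dotvBl a b c : dotv (a - b) c = dotv a c - dotv b c.
Proof. by rewrite dotvDl dotvNl. Qed.
Lemma dotvBr a b c : dotv c (a - b) = dotv c a - dotv c b.
Proof. by rewrite dotvDr dotvNr. Qed.
Lemma dotv0l a : dotv 0 a = 0.
Proof. by rewrite /dotv big1 // => i _; rewrite mxE mul0r. Qed.
Lemma dotv_suml (I : Type) (r : seq I) (P : pred I) (F : I -> 'rV[R]_n) b :
  dotv (\sum_(i <- r | P i) F i) b = \sum_(i <- r | P i) dotv (F i) b.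
Proof.
elim: r => [|x r IH]; first by rewrite !big_nil dotv0l.
by rewrite !big_cons; case: (P x); rewrite ?dotvDl IH.
Qed.
Lemma sqnorm_ge0 a : 0 <= sqnorm a.
Proof. by apply: sumr_ge0 => i _; rewrite -expr2 sqr_ge0. Qed.
Lemma sqnormD a b : sqnorm (a + b) = sqnorm a + 2 * dotv a b + sqnorm b.
Proof. rewrite /sqnorm dotvDl !dotvDr (dotvC b a); ring. Qed.
Lemma sqnormB a b : sqnorm (a - b) = sqnorm a - 2 * dotv a b + sqnorm b.
Proof. rewrite /sqnorm dotvBl !dotvBr (dotvC b a); ring. Qed.
Lemma sqnormZ k a : sqnorm (k *: a) = k ^+ 2 * sqnorm a.
Proof. rewrite /sqnorm dotvZl dotvZr; ring. Qed.
Lemma sqnormN a : sqnorm (- a) = sqnorm a.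
Proof. by rewrite /sqnorm dotvNl dotvNr opprK. Qed.
Lemma young a b k : 0 < k -> 2 * dotv a b <= k * sqnorm a + k^-1 * sqnorm b.
Proof.
move=> k0; have := sqnorm_ge0 (k *: a - b); rewrite sqnormB sqnormZ dotvZl.
move=> H; rewrite -(ler_pM2l k0) mulrDr mulrA (mulrA k k^-1) mulfV ?gt_eqF // mul1r.
nra.
Qed.
Lemma sqnormD_le a b : sqnorm (a + b) <= 2 * sqnorm a + 2 * sqnorm b.
Proof. have := young a b ltr01; rewrite invr1 sqnormD; lra. Qed.
Lemma sqnormD_lek a b k : 0 < k ->
  sqnorm (a + b) <= (1 + k) * sqnorm a + (1 + k^-1) * sqnorm b.
Proof. move=> k0; have := young a b k0; rewrite sqnormD; lra. Qed.
Lemma enorm_sq a : enorm a ^+ 2 = sqnorm a.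
Proof. by rewrite /enorm sqr_sqrtr // sqnorm_ge0. Qed.

Lemma sqnorm_sum m (F : nat -> 'rV[R]_n) :
  sqnorm (\sum_(0 <= i < m) F i) <= m%:R * \sum_(0 <= i < m) sqnorm (F i).
Proof.
elim: m => [|m IH]; first by rewrite !big_geq // mul0r /sqnorm dotv0l.
rewrite !big_nat_recr //=.
case: m IH => [|m] IH.
  by rewrite !big_geq // !add0r mul1r.
move: IH.
set S := \sum_(0 <= i < m.+1) F i; set Q := \sum_(0 <= i < m.+1) sqnorm (F i).
move=> HS.
have mp : 0 < (m.+1)%:R :> R by rewrite ltr0n.
have Y := young (F m.+1) S mp.
rewrite sqnormD (dotvC S).
have Hf := sqnorm_ge0 (F m.+1).
have E : (m.+2)%:R = (m.+1)%:R + 1 :> R by rewrite -natr1.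
rewrite E.
move: mp HS Y; set k := (m.+1)%:R : R => mp HS Y.
have Hk : k^-1 * sqnorm S <= Q.
  by rewrite -(ler_pM2l mp) mulrA mulfV ?gt_eqF // mul1r.
move: Y Hk; set t := k^-1 * sqnorm S => Y Hk.
nra.
Qed.
End Dot.

Lemma lip_sq (R : realType) n m (a : 'rV[R]_n) (b : 'rV[R]_m) (L : R) : 0 <= L -> enorm a <= L * enorm b -> sqnorm a <= L ^+ 2 * sqnorm b.
Proof.
move=> L0 H; rewrite -!enorm_sq -exprMn ler_sqr //.
  by rewrite nnegrE /enorm sqrtr_ge0.
by rewrite nnegrE mulr_ge0 // /enorm sqrtr_ge0.
Qed.


Section DescWrap.
Local Open Scope classical_set_scope.
Local Open Scope ring_scope.


Section Desc.
Variables (R : realType).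

Lemma dir_derive n (f : 'rV[R]_n -> R) (x a : 'rV[R]_n) (t df : R) :
  is_derive (x + t *: a) a f df -> is_derive t 1 (fun s : R => f (x + s *: a)) df.
Proof.
move=> [H1 H2].
have E : (fun h : R => h^-1 *: (((fun s : R => f (x + s *: a)) \o shift t) (h *: 1) - f (x + t *: a)))
  = (fun h : R => h^-1 *: ((f \o shift (x + t *: a)) (h *: a) - f (x + t *: a))).
  apply: funext => h /=; congr (_ *: (f _ - _)).
  by rewrite scalerDl [h *: 1]mulr1 addrCA addrC.
by split; rewrite /derivable /derive E.
Qed.

Lemma block_descent n (f : 'rV[R]_n -> R) (g : 'rV[R]_n -> 'rV[R]_n) (L : R) x a :
  0 < L ->
  (forall y d, is_derive y d f (dotv (g y) d)) ->
  (forall y, sqnorm (g y - g x) <= L ^+ 2 * sqnorm (y - x)) ->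
  f (x + a) - f x <= dotv (g x) a + L / 2 * sqnorm a.
Proof.
move=> L0 Hd Hl.
set c1 := dotv (g x) a; set c2 := L / 2 * sqnorm a.
pose phi := fun s : R => f (x + s *: a).
pose psi : R -> R := phi - c1 \*: (@idfun R) - c2 \*: ((@idfun R) ^+ 2).
have D : forall t : R, is_derive t 1 psi (dotv (g (x + t *: a)) a - c1 - c2 * (2 * t)).
  move=> t; have P := dir_derive (Hd (x + t *: a) a).
  rewrite /psi; apply: is_derive_eq.
  by rewrite /= expr1 [c1%:A]mulr1 [(2 * t)%:A]mulr1.
have C : {within `[0, 1], continuous psi}.
  apply: derivable_within_continuous => t _; exact: (@ex_derive _ _ _ _ _ _ _ (D t)).
have [c /andP[c0 c1lt] E] := MVT ltr01 (fun t _ => D t) C.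
have -> : f (x + a) - f x = psi 1 - psi 0 + c1 + c2.
  have psiE t : psi t = phi t - c1 * t - c2 * t ^+ 2 by [].
  rewrite !psiE /phi scale0r addr0 scale1r expr1n expr0n /= !mulr1 !mulr0; ring.
rewrite E subr0 mulr1.
suff : dotv (g (x + c *: a)) a - c1 <= c2 * (2 * c) by lra.
rewrite /c1 -dotvBl.
have Lp : 0 < L * c by rewrite mulr_gt0.
have Y : 2 * dotv (g (x + c *: a) - g x) a <= (L * c)^-1 * sqnorm (g (x + c *: a) - g x) + (L * c)^-1^-1 * sqnorm a by apply: young; rewrite invr_gt0.
have Hg := Hl (x + c *: a).
rewrite addrAC subrr add0r sqnormZ in Hg.
rewrite invrK in Y.
have : (L * c)^-1 * sqnorm (g (x + c *: a) - g x) <= L * c * sqnorm a.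
  rewrite -(ler_pM2l Lp) mulrA mulfV ?gt_eqF // mul1r.
  apply: (le_trans Hg); rewrite le_eqVlt; apply/orP; left; apply/eqP; ring.
rewrite /c2; move: Y; set u := (L * c)^-1 * _ => Y Hu.
lra.
Qed.

Lemma sqnorm_le0_dot n (x b : 'rV[R]_n) : sqnorm x <= 0 -> dotv x b = 0.
Proof.
move=> H.
have H0 : sqnorm x = 0 by apply/eqP; rewrite eq_le H sqnorm_ge0.
have Hx : forall i, x 0 i = 0.
  move=> i; move/eqP: H0; rewrite /sqnorm /dotv psumr_eq0; last first.
    by move=> j _; rewrite -expr2 sqr_ge0.
  by move/allP => /(_ i (mem_index_enum _)) /=; rewrite mulf_eq0 orbb => /eqP.
by rewrite /dotv big1 // => i _; rewrite Hx mul0r.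
Qed.

Lemma joint_descent du dv (F : 'rV[R]_du -> 'rV[R]_dv -> R)
  (gu : 'rV[R]_du -> 'rV[R]_dv -> 'rV[R]_du)
  (gv : 'rV[R]_du -> 'rV[R]_dv -> 'rV[R]_dv) (Lu Lv M chi : R) u v a b :
  0 < Lu -> 0 < Lv -> 0 <= chi -> M ^+ 2 = chi ^+ 2 * Lu * Lv ->
  (forall u v d, is_derive u d (fun u' => F u' v) (dotv (gu u v) d)) ->
  (forall u v d, is_derive v d (fun v' => F u v') (dotv (gv u v) d)) ->
  (forall u u' v, sqnorm (gu u v - gu u' v) <= Lu ^+ 2 * sqnorm (u - u')) ->
  (forall u v v', sqnorm (gv u v - gv u v') <= Lv ^+ 2 * sqnorm (v - v')) ->
  (forall u u' v, sqnorm (gv u v - gv u' v) <= M ^+ 2 * sqnorm (u - u')) ->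
  F (u + a) (v + b) - F u v <= dotv (gu u v) a + dotv (gv u v) b
     + (1 + chi) / 2 * (Lu * sqnorm a + Lv * sqnorm b).
Proof.
move=> Lu0 Lv0 chi0 HM Du Dv Lu2 Lv2 M2.
have D1 := @block_descent du (fun u' => F u' v) (fun u' => gu u' v) Lu u a Lu0
  (fun y d => Du y v d) (fun y => Lu2 y u v).
have D2 := @block_descent dv (fun v' => F (u + a) v') (fun v' => gv (u + a) v') Lv v b Lv0
  (fun y d => Dv (u + a) y d) (fun y => Lv2 (u + a) y v).
have Hc : dotv (gv (u + a) v - gv u v) b <= chi / 2 * (Lu * sqnorm a + Lv * sqnorm b).
  have Hm := M2 (u + a) u v; rewrite addrAC subrr add0r HM in Hm.
  have sa := sqnorm_ge0 a; have sb := sqnorm_ge0 b.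
  case: (ltrP 0 chi) => chip; last first.
    have c0 : chi = 0 by apply/eqP; rewrite eq_le chip chi0.
    rewrite c0 expr0n /= !mul0r in Hm.
    by rewrite (sqnorm_le0_dot b Hm) c0 !mul0r.
  have kp : 0 < chi * Lv by rewrite mulr_gt0.
  have Y : 2 * dotv (gv (u + a) v - gv u v) b <= (chi * Lv)^-1 * sqnorm (gv (u + a) v - gv u v) + (chi * Lv)^-1^-1 * sqnorm b.
    by apply: young; rewrite invr_gt0.
  rewrite invrK in Y.
  have : (chi * Lv)^-1 * sqnorm (gv (u + a) v - gv u v) <= chi * Lu * sqnorm a.
    rewrite -(ler_pM2l kp) mulrA mulfV ?gt_eqF // mul1r.
    apply: (le_trans Hm); rewrite le_eqVlt; apply/orP; left; apply/eqP; ring.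
  move: Y; set w := (chi * Lv)^-1 * _ => Y Hw.
  have e1 : chi * Lu * sqnorm a = chi * (Lu * sqnorm a) by ring.
  have e2 : chi * Lv * sqnorm b = chi * (Lv * sqnorm b) by ring.
  rewrite e1 in Hw; rewrite e2 in Y.
  lra.
have E : F (u + a) (v + b) - F u v = (F (u + a) (v + b) - F (u + a) v) + (F (u + a) v - F u v) by ring.
rewrite E.
have e3 : dotv (gv (u + a) v) b = dotv (gv u v) b + dotv (gv (u + a) v - gv u v) b by rewrite dotvBl; ring.
rewrite e3 in D2.
move: D1 D2 Hc.
set A := Lu * sqnorm a; set B := Lv * sqnorm b.
have -> : Lu / 2 * sqnorm a = A / 2 by rewrite /A; ring.
have -> : Lv / 2 * sqnorm b = B / 2 by rewrite /B; ring.
move=> D1 D2 Hc.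
have -> : (1 + chi) / 2 * (A + B) = (A + B) / 2 + chi / 2 * (A + B) by ring.
lra.
Qed.
End Desc.

End DescWrap.


Section Sums.
Variable R : realType.

Lemma sum_sq_le m : 6 * \sum_(0 <= j < m) (j%:R : R) ^+ 2 <= m%:R * (m%:R + 1) * (2 * m%:R + 1).
Proof.
elim: m => [|m IH]; first by rewrite big_geq // mulr0 mul0r mul0r.
rewrite big_nat_recr //= -natr1.
have m0 : 0 <= (m%:R : R) by [].
move: IH; set S := \sum_(0 <= j < m) _ => IH.
nra.
Qed.

Lemma sum_lin_le m : 2 * \sum_(0 <= j < m) (j%:R : R) <= m%:R ^+ 2.
Proof.
elim: m => [|m IH]; first by rewrite big_geq // mulr0 expr0n.
rewrite big_nat_recr //= -natr1.
have m0 : 0 <= (m%:R : R) by [].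
move: IH; set S := \sum_(0 <= j < m) _ => IH.
nra.
Qed.

Lemma prefix_le (F : nat -> R) j m : (j <= m)%N -> (forall i, 0 <= F i) ->
  \sum_(0 <= i < j) F i <= \sum_(0 <= i < m) F i.
Proof.
move=> jm F0; rewrite [X in _ <= X](big_cat_nat (n := j)) //= lerDl.
by apply: sumr_ge0 => i _.
Qed.

Lemma sum_poly_bound (x : nat -> R) (a b : R) m :
  0 <= a -> 0 <= b ->
  (forall j, (j < m)%N -> x j <= a * (j%:R) ^+ 2 + b * j%:R) ->
  \sum_(0 <= j < m) x j <= a * (m%:R * (m%:R + 1) * (2 * m%:R + 1)) / 6 + b * m%:R ^+ 2 / 2.
Proof.
move=> a0 b0 H.
apply: (le_trans (ler_sum_nat (G := fun j => a * (j%:R) ^+ 2 + b * j%:R) _)).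
  by move=> i /andP[_ ?]; exact: H.
rewrite big_split /= -!mulr_sumr.
have S1 := sum_sq_le m; have S2 := sum_lin_le m.
move: S1 S2; set s1 := \sum_(0 <= j < m) _; set s2 := \sum_(0 <= j < m) _ => S1 S2.
nra.
Qed.

Lemma part_bound n (g0 Z : 'rV[R]_n) (T eta c Ew : R) :
  0 < T -> 0 < eta -> 0 <= c -> c * eta * T <= 1 ->
  sqnorm (Z - T *: g0) <= T * Ew ->
  dotv g0 (- (eta *: Z)) + c / 2 * sqnorm (- (eta *: Z))
    <= - (eta * T / 2) * sqnorm g0 + eta / 2 * Ew.
Proof.
move=> T0 e0 c0 ceT HW.
rewrite dotvNr dotvZr sqnormN sqnormZ.
rewrite sqnormB sqnormZ dotvZr dotvC in HW.
have NZ := sqnorm_ge0 Z.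
move: HW; set P := dotv g0 Z; set NZ' := sqnorm Z; set N0 := sqnorm g0 => HW.
rewrite -(ler_pM2l (mulr_gt0 (ltr0Sn R 1) T0)).
have h1 : eta * (NZ' - 2 * (T * P) + T ^+ 2 * N0) <= eta * (T * Ew) by rewrite ler_pM2l.
have h2 : (c * eta * T) * (eta * NZ') <= 1 * (eta * NZ') by apply: ler_wpM2r => //; rewrite mulr_ge0 // ltW.
nra.
Qed.

End Sums.

Unset Implicit Arguments. Set Strict Implicit.


Ltac pos := repeat first [ done | assumption | apply: sqr_ge0 | apply: ler0n | apply: addr_ge0 | apply: mulr_ge0 | (apply: ltW; assumption) ].

Theorem lemma2 (R : realType) (X : Type) (C du dv p : nat)
  (s : seq (X * 'I_C))
  (f : X -> 'I_C -> 'rV[R]_du -> 'rV[R]_dv -> R)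
  (h : X -> 'rV[R]_du -> 'rV[R]_p)
  (Jh : X -> 'rV[R]_du -> 'M[R]_(du, p))
  (Om : 'I_C -> 'rV[R]_p)
  (gu : 'rV[R]_du -> 'rV[R]_dv -> 'rV[R]_du)
  (gv : 'rV[R]_du -> 'rV[R]_dv -> 'rV[R]_dv)
  (gL : 'rV[R]_du -> 'rV[R]_du)
  (Lu Lv Luv Lvu G1 G2 theta vsig lam eta_u eta_v : R) (tau : nat)
  (u0 : 'rV[R]_du) (v0 : 'rV[R]_dv) :
  (* finite, nonempty local dataset *)
  (0 < size s)%N ->
  (* (i) F_k is continuously differentiable, with partial gradients gu, gv *)
  (forall u v d, is_derive u d (fun u' => emp_loss s f u' v) (dotv (gu u v) d)) ->
  (forall u v d, is_derive v d (fun v' => emp_loss s f u v') (dotv (gv u v) d)) ->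
  continuous (fun w : 'rV[R]_du * 'rV[R]_dv => gu w.1 w.2) ->
  continuous (fun w : 'rV[R]_du * 'rV[R]_dv => gv w.1 w.2) ->
  (* Lipschitz constants *)
  0 < Lu -> 0 < Lv -> 0 <= Luv -> 0 <= Lvu ->
  (forall u u' v, enorm (gu u v - gu u' v) <= Lu * enorm (u - u')) ->
  (forall u v v', enorm (gu u v - gu u v') <= Luv * enorm (v - v')) ->
  (forall u v v', enorm (gv u v - gv u v') <= Lv * enorm (v - v')) ->
  (forall u u' v, enorm (gv u v - gv u' v) <= Lvu * enorm (u - u')) ->
  (* feature extractor h_k(x; .) is differentiable with Jacobian Jh, and gL = grad L_k *)
  (forall x u d, is_derive u d (h x) (d *m Jh x u)) ->
  (forall u d, is_derive u d (know_loss s h Om) (dotv (gL u) d)) ->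
  (* (ii) bounded gradients along all local iterates *)
  (forall l, (l <= tau)%N ->
     sqnorm (gu (local_iter gu gv gL eta_u eta_v lam u0 v0 l).1
                (local_iter gu gv gL eta_u eta_v lam u0 v0 l).2) <= G1 ^+ 2) ->
  (forall l, (l <= tau)%N ->
     sqnorm (gv (local_iter gu gv gL eta_u eta_v lam u0 v0 l).1
                (local_iter gu gv gL eta_u eta_v lam u0 v0 l).2) <= G2 ^+ 2) ->
  (* (iii) bounded feature extractor and its gradient *)
  (forall x u, sqfrob (Jh x u) <= theta ^+ 2) ->
  (forall x u, sqnorm (h x u) <= vsig ^+ 2) ->
  (* hyperparameters *)
  0 <= lam -> (0 < tau)%N -> 0 < eta_u -> 0 < eta_v ->
  let chi := Num.max Luv Lvu / Num.sqrt (Lu * Lv) in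
  eta_u <= (4 * tau%:R * (1 + chi) * Lu)^-1 ->
  eta_v <= (2 * tau%:R * (1 + chi) * Lv)^-1 ->
  let it := local_iter gu gv gL eta_u eta_v lam u0 v0 in
  let T := tau%:R : R in
  let A1 := T * (T + 1) * (2 * T + 1) *
     (eta_u ^+ 3 * G1 ^+ 2 * Lu ^+ 2 + 3%:R^-1 * eta_v ^+ 3 * G2 ^+ 2 * Lv ^+ 2
      + (2 / 3%:R * eta_u * G1 ^+ 2 + 2%:R^-1 * eta_v * G2 ^+ 2)
        * eta_u * eta_v * chi ^+ 2 * Lu * Lv) in
  emp_loss s f (it tau).1 (it tau).2 - emp_loss s f u0 v0 <=
    (2 * (1 + chi) * Lu * eta_u ^+ 2 * T ^+ 2 - 2%:R^-1 * eta_u * T)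
      * sqnorm (gu u0 v0)
  + ((1 + chi) * Lv * eta_v ^+ 2 * T ^+ 2 - 2%:R^-1 * eta_v * T)
      * sqnorm (gv u0 v0)
  + A1
  + 5 / 4%:R * eta_u * lam ^+ 2 * \sum_(l < tau) sqnorm (gL (it l).1)
  + 2 * eta_u ^+ 2 * lam ^+ 2 * (3 * eta_u * Lu ^+ 2 + 2 * eta_v * chi ^+ 2 * Lu * Lv)
      * \sum_(l < tau) (T - l%:R) * sqnorm (gL (it l).1).
Proof.
move=> Hs DFu DFv Cu Cv Lu0 Lv0 Luv0 Lvu0 Lgu_u Lgu_v Lgv_v Lgv_u Dh DL HG1 HG2
  Hth Hvs lam0 tau0 eu0 ev0 chi Heu Hev.
cbv zeta.
pose it := local_iter gu gv gL eta_u eta_v lam u0 v0.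
pose T := tau%:R : R.
pose M : R := Num.max Luv Lvu.
have M0 : 0 <= M by rewrite le_max Luv0.
have sLL : 0 < Num.sqrt (Lu * Lv) by rewrite sqrtr_gt0 mulr_gt0.
have chi0 : 0 <= chi by rewrite divr_ge0 // ltW.
have HM : M ^+ 2 = chi ^+ 2 * Lu * Lv.
  rewrite /chi /M expr_div_n sqr_sqrtr ?mulr_ge0 ?ltW //; field.
  by rewrite !gt_eqF.
have L1 u u' v : sqnorm (gu u v - gu u' v) <= Lu ^+ 2 * sqnorm (u - u').
  exact: lip_sq (ltW Lu0) (Lgu_u u u' v).
have L2 u v v' : sqnorm (gv u v - gv u v') <= Lv ^+ 2 * sqnorm (v - v').
  exact: lip_sq (ltW Lv0) (Lgv_v u v v').
have L3 u u' v : sqnorm (gv u v - gv u' v) <= M ^+ 2 * sqnorm (u - u').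
  apply: (lip_sq M0); apply: (le_trans (Lgv_u u u' v)).
  by apply: ler_wpM2r; [rewrite /enorm sqrtr_ge0 | rewrite le_max lexx orbT].
have L4 u v v' : sqnorm (gu u v - gu u v') <= M ^+ 2 * sqnorm (v - v').
  apply: (lip_sq M0); apply: (le_trans (Lgu_v u v v')).
  by apply: ler_wpM2r; [rewrite /enorm sqrtr_ge0 | rewrite le_max lexx].
pose U := fun l => (local_iter gu gv gL eta_u eta_v lam u0 v0 l).1.
pose V := fun l => (local_iter gu gv gL eta_u eta_v lam u0 v0 l).2.
pose g := fun l => gu (U l) (V l).
pose k := fun l => gv (U l) (V l).
pose q := fun l => gL (U l).
have HU : forall l, U l = u0 - eta_u *: \sum_(0 <= j < l) (g j + lam *: q j).
  elim=> [|l IH]; first by rewrite big_geq // scaler0 subr0.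
  rewrite big_nat_recr //= scalerDr opprD addrA -IH.
  by [].
have HV : forall l, V l = v0 - eta_v *: \sum_(0 <= j < l) k j.
  elim=> [|l IH]; first by rewrite big_geq // scaler0 subr0.
  rewrite big_nat_recr //= scalerDr opprD addrA -IH.
  by [].
have T0 : 0 < T by rewrite ltr0n.
have rho : (1 + chi) * Lu * eta_u * T <= 1 / 4.
  have Dp : 0 < 4 * T * (1 + chi) * Lu by rewrite !mulr_gt0 // ?ltr0n // ltr_pwDl.
  have := ler_wpM2l (ltW Dp) Heu; rewrite mulfV ?gt_eqF // => H.
  have -> : (1 + chi) * Lu * eta_u * T = (4 * tau%:R * (1 + chi) * Lu * eta_u) / 4 by rewrite /T; field.
  by rewrite ler_pM2r ?invr_gt0 ?ltr0n.
have sig : (1 + chi) * Lv * eta_v * T <= 1 / 2.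
  have Dp : 0 < 2 * T * (1 + chi) * Lv by rewrite !mulr_gt0 // ?ltr0n // ltr_pwDl.
  have := ler_wpM2l (ltW Dp) Hev; rewrite mulfV ?gt_eqF // => H.
  have -> : (1 + chi) * Lv * eta_v * T = (2 * tau%:R * (1 + chi) * Lv * eta_v) / 2 by rewrite /T; field.
  by rewrite ler_pM2r ?invr_gt0 ?ltr0n.
pose Q := \sum_(0 <= j < tau) sqnorm (q j).
have Q0 : 0 <= Q by apply: sumr_ge0 => j _; exact: sqnorm_ge0.
have Ub : forall j eps, (j <= tau)%N -> 0 < eps ->
    sqnorm (U j - u0) <= eta_u ^+ 2 * ((1 + eps) * ((j%:R) ^+ 2 * G1 ^+ 2)
                                       + (1 + eps^-1) * (lam ^+ 2 * (j%:R * Q))).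
  move=> j eps jt e0.
  rewrite HU addrAC subrr add0r sqnormN sqnormZ ler_wpM2l ?sqr_ge0 //.
  rewrite big_split /= -scaler_sumr.
  apply: (le_trans (sqnormD_lek _ _ e0)).
  rewrite sqnormZ.
  apply: lerD; apply: ler_wpM2l.
  - by apply: addr_ge0 => //; rewrite ltW.
  - apply: (le_trans (sqnorm_sum _ _)).
    rewrite expr2 -mulrA ler_wpM2l //.
    apply: (le_trans (ler_sum_nat (G := fun _ => G1 ^+ 2) _)).
      move=> i /andP[_ ij]; apply: HG1; exact: (leq_trans (ltnW ij) jt).
    by rewrite sumr_const_nat subn0 -mulr_natl le_eqVlt; apply/orP; left; apply/eqP; ring.
  - by apply: addr_ge0 => //; rewrite invr_ge0 ltW.
  - apply: ler_wpM2l; first exact: sqr_ge0.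
    apply: (le_trans (sqnorm_sum _ _)).
    rewrite ler_wpM2l //.
    by apply: prefix_le => // i; exact: sqnorm_ge0.
have Vb : forall j, (j <= tau)%N -> sqnorm (V j - v0) <= eta_v ^+ 2 * ((j%:R) ^+ 2 * G2 ^+ 2).
  move=> j jt.
  rewrite HV addrAC subrr add0r sqnormN sqnormZ ler_wpM2l ?sqr_ge0 //.
  apply: (le_trans (sqnorm_sum _ _)).
  rewrite expr2 -mulrA ler_wpM2l //.
  apply: (le_trans (ler_sum_nat (G := fun _ => G2 ^+ 2) _)).
    move=> i /andP[_ ij]; apply: HG2; exact: (leq_trans (ltnW ij) jt).
  by rewrite sumr_const_nat subn0 -mulr_natl le_eqVlt; apply/orP; left; apply/eqP; ring.
have g0E : g 0%N = gu u0 v0 by [].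
have k0E : k 0%N = gv u0 v0 by [].
have U0 : U 0%N = u0 by [].
have V0 : V 0%N = v0 by [].
pose E := \sum_(0 <= j < tau) sqnorm (g j - g 0%N).
pose Ek := \sum_(0 <= j < tau) sqnorm (k j - k 0%N).
have Eb : E <= (6 * Lu ^+ 2 * eta_u ^+ 2 * G1 ^+ 2 + 2 * M ^+ 2 * eta_v ^+ 2 * G2 ^+ 2)
                * (T * (T + 1) * (2 * T + 1)) / 6
              + (3 * Lu ^+ 2 * eta_u ^+ 2 * lam ^+ 2 * Q) * T ^+ 2 / 2.
  apply: sum_poly_bound.
  - by pos.
  - by pos.
  move=> j jt.
  have e : g j - g 0%N = (gu (U j) (V j) - gu u0 (V j)) + (gu u0 (V j) - gu u0 v0).
    by rewrite addrA subrK.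
  rewrite e.
  have h0 := sqnormD_le (gu (U j) (V j) - gu u0 (V j)) (gu u0 (V j) - gu u0 v0).
  have h1 := L1 (U j) u0 (V j).
  have h2 := L4 u0 (V j) v0.
  have h3 := ler_wpM2l (sqr_ge0 Lu) (Ub j 2 (ltnW jt) (ltr0Sn R 1)).
  have h4 := ler_wpM2l (sqr_ge0 M) (Vb j (ltnW jt)).
  have e3 : (1 + 2 : R) = 3 by ring.
  have e4 : (1 + 2^-1 : R) = 3 / 2 by field.
  rewrite e3 e4 in h3.
  move: h0 h1 h2 h3 h4.
  set a1 := sqnorm _; set a2 := sqnorm _; set a3 := sqnorm _; set a4 := sqnorm (U j - u0); set a5 := sqnorm (V j - v0).
  move=> h0 h1 h2 h3 h4.
  lra.
have Ekb : Ek <= (2 * Lv ^+ 2 * eta_v ^+ 2 * G2 ^+ 2 + 8 * M ^+ 2 * eta_u ^+ 2 * G1 ^+ 2)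
                * (T * (T + 1) * (2 * T + 1)) / 6
              + (8 / 3 * M ^+ 2 * eta_u ^+ 2 * lam ^+ 2 * Q) * T ^+ 2 / 2.
  apply: sum_poly_bound.
  - by pos.
  - have : (0 : R) <= 8 / 3 by rewrite divr_ge0 // ler0n.
    by move=> ?; pos.
  move=> j jt.
  have e : k j - k 0%N = (gv (U j) (V j) - gv (U j) v0) + (gv (U j) v0 - gv u0 v0).
    by rewrite addrA subrK.
  rewrite e.
  have h0 := sqnormD_le (gv (U j) (V j) - gv (U j) v0) (gv (U j) v0 - gv u0 v0).
  have h1 := L2 (U j) (V j) v0.
  have h2 := L3 (U j) u0 v0.
  have h3 := ler_wpM2l (sqr_ge0 M) (Ub j 3 (ltnW jt) (ltr0Sn R 2)).
  have h4 := ler_wpM2l (sqr_ge0 Lv) (Vb j (ltnW jt)).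
  have e3 : (1 + 3 : R) = 4 by ring.
  have e4 : (1 + 3^-1 : R) = 4 / 3 by field.
  rewrite e3 e4 in h3.
  move: h0 h1 h2 h3 h4.
  set a1 := sqnorm _; set a2 := sqnorm _; set a3 := sqnorm _; set a4 := sqnorm (U j - u0); set a5 := sqnorm (V j - v0).
  move=> h0 h1 h2 h3 h4.
  lra.
pose Z := \sum_(0 <= j < tau) (g j + lam *: q j).
pose Y := \sum_(0 <= j < tau) k j.
have Ea : U tau - u0 = - (eta_u *: Z) by rewrite HU addrAC subrr add0r.
have Eb' : V tau - v0 = - (eta_v *: Y) by rewrite HV addrAC subrr add0r.
have HWu : sqnorm (Z - T *: g 0%N) <= T * (2 * E + 2 * (lam ^+ 2 * Q)).
  have -> : T *: g 0%N = \sum_(0 <= j < tau) g 0%N by rewrite sumr_const_nat subn0 scaler_nat.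
  rewrite /Z -sumrB.
  apply: (le_trans (sqnorm_sum _ _)).
  rewrite ler_wpM2l //.
  apply: (le_trans (ler_sum_nat (G := fun j => 2 * sqnorm (g j - g 0%N) + 2 * (lam ^+ 2 * sqnorm (q j))) _)).
    move=> j _; rewrite addrAC.
    by apply: (le_trans (sqnormD_le _ _)); rewrite sqnormZ.
  by rewrite big_split /= -!mulr_sumr.
have HWv : sqnorm (Y - T *: k 0%N) <= T * Ek.
  have -> : T *: k 0%N = \sum_(0 <= j < tau) k 0%N by rewrite sumr_const_nat subn0 scaler_nat.
  rewrite /Y -sumrB.
  exact: (le_trans (sqnorm_sum _ _)).
have c1p : 0 <= (1 + chi) * Lu by pos.
have c2p : 0 <= (1 + chi) * Lv by pos.
have rho1 : (1 + chi) * Lu * eta_u * T <= 1 by lra.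
have sig1 : (1 + chi) * Lv * eta_v * T <= 1 by lra.
have Up := part_bound T0 eu0 c1p rho1 HWu.
have Vp := part_bound T0 ev0 c2p sig1 HWv.
have Dsc := joint_descent (F := emp_loss s f) u0 v0 (U tau - u0) (V tau - v0)
   Lu0 Lv0 chi0 HM DFu DFv L1 L2 L3.
rewrite !subrKC Ea Eb' in Dsc.
have QE : \sum_(l < tau) sqnorm (gL (local_iter gu gv gL eta_u eta_v lam u0 v0 l).1) = Q.
  by rewrite /Q big_mkord.
rewrite QE -/T.
set Last := \sum_(l < tau) _.
have Last0 : 0 <= Last.
  apply: sumr_ge0 => l _; apply: mulr_ge0; last exact: sqnorm_ge0.
  by rewrite subr_ge0 ler_nat ltnW.
rewrite g0E in Up HWu; rewrite k0E in Vp HWv.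
rewrite HM in Eb Ekb.
move: Dsc; rewrite /U /V /= => Dsc.
have f3 := ler_wpM2l (ltW eu0) Eb.
have ev2 : 0 <= eta_v / 2 by rewrite divr_ge0 // ltW.
have f4 := ler_wpM2l ev2 Ekb.
set S := T * (T + 1) * (2 * T + 1).
have S0 : 0 <= S by pos.
set X1 := (Lu * eta_u * T) ^+ 2 * (eta_u * lam ^+ 2 * Q).
set X2 := chi * Lu * eta_u * T * (chi * Lv * eta_v * T) * (eta_u * lam ^+ 2 * Q).
set P1 := S * (eta_u ^+ 3 * G1 ^+ 2 * Lu ^+ 2 + 3^-1 * (eta_u * eta_v ^+ 2 * chi ^+ 2 * Lu * Lv * G2 ^+ 2)).
set P2 := S * (6^-1 * (eta_v ^+ 3 * Lv ^+ 2 * G2 ^+ 2) + 2 / 3 * (eta_v * eta_u ^+ 2 * chi ^+ 2 * Lu * Lv * G1 ^+ 2)).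
set P3 := S * (6^-1 * (eta_v ^+ 3 * Lv ^+ 2 * G2 ^+ 2) + 6^-1 * (eta_u * eta_v ^+ 2 * chi ^+ 2 * Lu * Lv * G2 ^+ 2)).
have g3 : eta_u * E <= P1 + 3 / 2 * X1.
  apply: (le_trans f3); rewrite le_eqVlt; apply/orP; left; apply/eqP.
  by rewrite /P1 /X1 /S; field.
have g4 : eta_v / 2 * Ek <= P2 + 2 / 3 * X2.
  apply: (le_trans f4); rewrite le_eqVlt; apply/orP; left; apply/eqP.
  by rewrite /P2 /X2 /S; field.
have P30 : 0 <= P3.
  have i6 : (0 : R) <= 6^-1 by rewrite invr_ge0 ler0n.
  by rewrite /P3; pos.
have A1e : S * (eta_u ^+ 3 * G1 ^+ 2 * Lu ^+ 2 + 3^-1 * eta_v ^+ 3 * G2 ^+ 2 * Lv ^+ 2 +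
   (2 / 3 * eta_u * G1 ^+ 2 + 2^-1 * eta_v * G2 ^+ 2) * eta_u * eta_v *
   chi ^+ 2 * Lu * Lv) = P1 + P2 + P3.
  by rewrite /P1 /P2 /P3; field.
rewrite A1e.
set N0 := sqnorm (gu u0 v0).
set K0 := sqnorm (gv u0 v0).
have N00 : 0 <= N0 by exact: sqnorm_ge0.
have K00 : 0 <= K0 by exact: sqnorm_ge0.
have f1 : 0 <= (1 + chi) * Lu * eta_u ^+ 2 * T ^+ 2 * N0 by pos.
have f2 : 0 <= (1 + chi) * Lv * eta_v ^+ 2 * T ^+ 2 * K0 by pos.
have eq0 : 0 <= eta_u * lam ^+ 2 * Q by pos.
have a0 : 0 <= Lu * eta_u * T by pos.
have b10 : 0 <= chi * Lu * eta_u * T by pos.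
have a0v : 0 <= Lv * eta_v * T by pos.
have b20 : 0 <= chi * Lv * eta_v * T by pos.
have a1 : Lu * eta_u * T <= 1 / 4.
  apply: le_trans rho; rewrite -subr_ge0.
  have -> : (1 + chi) * Lu * eta_u * T - Lu * eta_u * T = chi * Lu * eta_u * T by ring.
  exact: b10.
have b1 : chi * Lu * eta_u * T <= 1 / 4.
  apply: le_trans rho; rewrite -subr_ge0.
  have -> : (1 + chi) * Lu * eta_u * T - chi * Lu * eta_u * T = Lu * eta_u * T by ring.
  exact: a0.
have b2 : chi * Lv * eta_v * T <= 1 / 2.
  apply: le_trans sig; rewrite -subr_ge0.
  have -> : (1 + chi) * Lv * eta_v * T - chi * Lv * eta_v * T = Lv * eta_v * T by ring.
  exact: a0v.
have f7 : X1 <= 1 / 16 * (eta_u * lam ^+ 2 * Q).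
  rewrite /X1; apply: ler_wpM2r => //.
  have -> : (1 / 16 : R) = 1 / 4 * (1 / 4) by field.
  by rewrite expr2; apply: ler_pM.
have f8 : X2 <= 1 / 8 * (eta_u * lam ^+ 2 * Q).
  rewrite /X2; apply: ler_wpM2r => //.
  have -> : (1 / 8 : R) = 1 / 4 * (1 / 2) by field.
  by apply: ler_pM.
have e1 : (1 + chi) / 2 * (Lu * sqnorm (- (eta_u *: Z)) + Lv * sqnorm (- (eta_v *: Y)))
   = (1 + chi) * Lu / 2 * sqnorm (- (eta_u *: Z)) + (1 + chi) * Lv / 2 * sqnorm (- (eta_v *: Y)) by ring.
rewrite e1 in Dsc.
move: Dsc Up Vp.
set LHS := _ - _.
set d1 := dotv _ _; set d2 := dotv _ _; set w1 := _ / 2 * sqnorm _; set w2 := _ / 2 * sqnorm _.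
move=> Dsc Up Vp.
have step1 : LHS <= - (eta_u * T / 2) * N0 + eta_u / 2 * (2 * E + 2 * (lam ^+ 2 * Q))
     - (eta_v * T / 2) * K0 + eta_v / 2 * Ek.
  rewrite -/N0 in Up; rewrite -/K0 in Vp; clear -Dsc Up Vp; lra.
set Q4 := eta_u * lam ^+ 2 * Q.
have eQ : eta_u / 2 * (2 * E + 2 * (lam ^+ 2 * Q)) = eta_u * E + Q4 by rewrite /Q4; field.
rewrite eQ in step1.
have eG : 5 / 4 * eta_u * lam ^+ 2 * Q = 5 / 4 * Q4 by rewrite /Q4; ring.
rewrite eG.
move: f1 f2; set F1 := (1 + chi) * Lu * eta_u ^+ 2 * T ^+ 2 * N0; set F2 := (1 + chi) * Lv * eta_v ^+ 2 * T ^+ 2 * K0 => f1 f2.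
have eN : (2 * (1 + chi) * Lu * eta_u ^+ 2 * T ^+ 2 - 2^-1 * eta_u * T) * N0 = 2 * F1 - (eta_u * T / 2) * N0 by rewrite /F1; field.
have eK : ((1 + chi) * Lv * eta_v ^+ 2 * T ^+ 2 - 2^-1 * eta_v * T) * K0 = F2 - (eta_v * T / 2) * K0 by rewrite /F2; field.
rewrite eN eK.
set LastT := _ * Last.
have LT0 : 0 <= LastT.
  rewrite /LastT; apply: mulr_ge0 => //; pos.
rewrite !mulNr in step1; rewrite -/Q4 in f7 f8 eq0.
move: step1 g3 g4 f1 f2 f7 f8 LT0 P30 eq0.
set nN := eta_u * T / 2 * N0; set nK := eta_v * T / 2 * K0; set eE := eta_u * E; set eK' := eta_v / 2 * Ek.
move=> step1 g3 g4 f1 f2 f7 f8 LT0 P30 eq0.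
clear -step1 g3 g4 f1 f2 f7 f8 LT0 P30 eq0.
lra.
Qed.
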